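(* Let $s\ge1$ and $d\ge1$ be integers. There exists a $(0,1)$-matrix $M'$ with ${\rm br}_s(M')=d$ and $r(M')\cdot c(M')=\binom{d}{\le s}2^d$.
   Context: For a $(0,1)$-matrix $M$ of size $n\times m$, $M[i,j]$ denotes its $(i,j)$ entry and $[n]=\{1,\dots,n\}$. The $s$-binary rank ${\rm br}_s(M)$ is the minimal integer $d\ge 0$ such that there exist $d$ sets (rectangles) $I_k\times J_k$ with $I_k\subseteq[n]$, $J_k\subseteq[m]$, $k\in[d]$, with $M[i,j]=1$ for all $(i,j)\in I_k\times J_k$ and all $k$, and such that every $(i,j)$ with $M[i,j]=1$ lies in at least one and at most $s$ of the rectangles. $r(M)$ and $c(M)$ denote the numbers of distinct rows and distinct columns of $M$. $\binom{d}{\le s}=\sum_{i=0}^{s}\binom{d}{i}$. *)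

(* Defs.v *)
From mathcomp Require Import all_boot all_algebra.
Set Implicit Arguments. Unset Strict Implicit. Unset Printing Implicit Defensive.

Definition is_s_cover (n m : nat) (M : 'M[bool]_(n, m)) (s d : nat)
  (I : 'I_d -> {set 'I_n}) (J : 'I_d -> {set 'I_m}) : Prop :=
  (forall (k : 'I_d) (i : 'I_n) (j : 'I_m), i \in I k -> j \in J k -> M i j) /\
  (forall (i : 'I_n) (j : 'I_m), M i j ->
     let cnt := #|[set k : 'I_d | (i \in I k) && (j \in J k)]| in
     1 <= cnt <= s).

Definition has_s_cover (n m : nat) (M : 'M[bool]_(n, m)) (s d : nat) : Prop :=
  exists (I : 'I_d -> {set 'I_n}) (J : 'I_d -> {set 'I_m}), is_s_cover M s I J.

Definition is_s_binary_rank (n m : nat) (M : 'M[bool]_(n, m)) (s d : nat) : Prop :=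
  has_s_cover M s d /\ (forall d', has_s_cover M s d' -> d <= d').

Definition num_rows (n m : nat) (M : 'M[bool]_(n, m)) : nat :=
  #|[set row i M | i : 'I_n]|.
Definition num_cols (n m : nat) (M : 'M[bool]_(n, m)) : nat :=
  #|[set col j M | j : 'I_m]|.

Definition binom_le (d s : nat) : nat := \sum_(i < s.+1) 'C(d, i).

(* Main.v *)
Require Import Defs.
From mathcomp Require Import all_boot all_algebra.

Section C.
Variables (s d : nat).
Definition Ps : {set {set 'I_d}} := [set A : {set 'I_d} | #|A| <= s].
Lemma set0Ps : set0 \in Ps. Proof. by rewrite inE cards0. Qed.
Definition rA (i : 'I_#|Ps|) : {set 'I_d} := enum_val i.
Definition cB (j : 'I_#|{: {set 'I_d}}|) : {set 'I_d} := enum_val j.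
Definition Mx : 'M[bool]_(#|Ps|, #|{: {set 'I_d}}|) :=
  \matrix_(i, j) (rA i :&: cB j != set0).

Lemma card_Ps : #|Ps| = binom_le d s.
Proof.
rewrite /binom_le.
have E : forall k, 'C(d, k) = \sum_(A : {set 'I_d}) (#|A| == k).
  move=> k; rewrite -[d in 'C(d, _)]card_ord -card_draws -sum1_card big_mkcond.
  by apply: eq_bigr => A _; rewrite inE; case: (_ == _).
under eq_bigr => k _ do rewrite E.
rewrite -sum1_card big_mkcond /= exchange_big /=.
apply: eq_bigr => A _.
rewrite inE; case: ifP => h.
  rewrite (bigD1 (Ordinal (h : #|A| < s.+1))) //= eqxx big1 // => k.
  by rewrite -val_eqE /= eq_sym => /negbTE ->.
rewrite big1 // => k _; apply/eqP; rewrite eqb0; apply/eqP => e.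
by move: (ltn_ord k); rewrite -e ltnS h.
Qed.
End C.

Theorem lemma5 (s d : nat) (hs : 1 <= s) (hd : 1 <= d) :
  exists (n m : nat) (M : 'M[bool]_(n, m)),
    is_s_binary_rank M s d /\
    num_rows M * num_cols M = binom_le d s * 2 ^ d.
Proof.
have sP : forall k : 'I_d, [set k] \in Ps s d by move=> k; rewrite inE cards1.
pose ri (k : 'I_d) := enum_rank_in (set0Ps s d) [set k].
pose cj (k : 'I_d) := enum_rank [set k].
have riE k : rA s d (ri k) = [set k] by rewrite /rA /ri enum_rankK_in.
have cjE k : cB d (cj k) = [set k] by rewrite /cB /cj enum_rankK.
have M1 : forall (A B : {set 'I_d}) (k : 'I_d), k \in A -> k \in B -> A :&: B != set0.
  by move=> A B k kA kB; apply/set0Pn; exists k; rewrite inE kA kB.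
have Ms : forall (A : {set 'I_d}) (k : 'I_d), (A :&: [set k] != set0) = (k \in A).
  move=> A k; apply/idP/idP; last by move=> kA; apply: (M1 _ _ k); rewrite ?inE.
  by case/set0Pn => x; rewrite !inE => /andP[xA /eqP <-].
have Ms' : forall (A : {set 'I_d}) (k : 'I_d), ([set k] :&: A != set0) = (k \in A) by move=> A k; rewrite setIC Ms.
exists #|Ps s d|, #|{: {set 'I_d}}|, (Mx s d); split; [split|].
- exists (fun k => [set i | k \in rA s d i]), (fun k => [set j | k \in cB d j]); split.
    by move=> k i j; rewrite !inE mxE; apply: M1.
  move=> i j; rewrite mxE /= => ne.
  have -> : [set k | (i \in [set i0 | k \in rA s d i0]) && (j \in [set j0 | k \in cB d j0])]
           = rA s d i :&: cB d j by apply/setP => k; rewrite !inE.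
  rewrite card_gt0 ne /=; apply: leq_trans (subset_leq_card (subsetIl _ _)) _.
  by have := enum_valP i; rewrite inE.
- move=> d' [I [J [H1 H2]]].
  have ex : forall k : 'I_d, exists r : 'I_d', (ri k \in I r) && (cj k \in J r).
    move=> k; have := H2 (ri k) (cj k); rewrite mxE riE cjE Ms !inE eqxx /=.
    move=> h; have {h} := h isT; case/andP; rewrite card_gt0 => /set0Pn [r]; rewrite inE => p _; by exists r.
  have [f Hf] := fin_all_exists ex.
  suff inj : injective f by have := leq_card _ inj; rewrite !card_ord.
  move=> k k' e; have /andP[a _] := Hf k; have /andP[_ b] := Hf k'.
  rewrite e in a; have := H1 _ _ _ a b; rewrite mxE riE cjE Ms' inE.
  by move/eqP.
- rewrite -(card_Ps s d); congr (_ * _).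
  + rewrite /num_rows card_imset //= ?card_ord // => i i' e.
    apply: enum_val_inj; apply/setP => k.
    have := congr1 (fun r : 'rV[bool]_ _ => r ord0 (cj k)) e; rewrite /= !mxE.
    by rewrite -/(rA s d i) -/(rA s d i') cjE !Ms.
  + rewrite /num_cols card_imset //= ?card_ord; last first.
      move=> j j' e; apply: enum_val_inj; apply/setP => k.
      have := congr1 (fun r : 'cV[bool]_ _ => r (ri k) ord0) e; rewrite /= !mxE.
      by rewrite -/(cB d j) -/(cB d j') riE !Ms'.
    have -> : 2 ^ d = #|powerset [set: 'I_d]| by rewrite card_powerset cardsT card_ord.
    by rewrite powersetT cardsT.
Qed.
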